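(* Let $m\ge2$ and let $G:\mathbb{R}^{m(m-1)/2}\to\mathbb{S}^m$ be defined by $G(x)=I+\sum_{1\le i<j\le m}A^{ij}x_{ij}$, where the components of $x$ are indexed by pairs $(i,j)$ with $1\le i<j\le m$. Then every $x$ with $G(x)\in\mathbb{S}^m_+$ is nondegenerate, i.e. $$\mathbb{S}^m=\operatorname{lin}\mathcal{T}_{\mathbb{S}^m_+}(G(x))+\operatorname{Im}\nabla G(x).$$
   Context: $\mathbb{S}^m$ is the space of real symmetric $m\times m$ matrices and $\mathbb{S}^m_+$ the cone of positive semidefinite ones. $A^{ij}$ denotes the $m\times m$ matrix with $1$ in the $(i,j)$ and $(j,i)$ entries and $0$ elsewhere. $\mathcal{T}_{\mathbb{S}^m_+}(Y)$ is the tangent cone of $\mathbb{S}^m_+$ at $Y$, $\operatorname{lin}K=K\cap(-K)$ is the lineality space of a cone $K$, and $\operatorname{Im}\nabla G(x)$ is the image of the derivative $\nabla G(x):\mathbb{R}^{m(m-1)/2}\to\mathbb{S}^m$, $v\mapsto\sum_{i<j}v_{ij}A^{ij}$. (This is the constraint of the closest correlation matrix problem: minimize $\sum_{i<j}(H_{ij}-x_{ij})^2$ subject to $G(x)\in\mathbb{S}^m_+$, for a given symmetric $H$.) *)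

(* Defs.v *)
From HB Require Import structures.
From mathcomp Require Import all_boot all_order all_algebra.
From mathcomp Require Import reals.
Set Implicit Arguments. Unset Strict Implicit. Unset Printing Implicit Defensive.
Import Order.TTheory GRing.Theory Num.Theory.
Local Open Scope ring_scope.

(* Index set {(i,j) : 1 <= i < j <= m} (0-based here); R^{m(m-1)/2} = pairs m -> R *)
Definition pairs (m : nat) : finType := {p : 'I_m * 'I_m | (p.1 < p.2)%N}.

Definition symmx (R : realType) (m : nat) (A : 'M[R]_m) : Prop := A^T = A.

Definition psdmx (R : realType) (m : nat) (A : 'M[R]_m) : Prop :=
  symmx A /\ forall v : 'cV[R]_m, 0 <= (v^T *m A *m v) 0 0.

Definition Aij (R : realType) (m : nat) (i j : 'I_m) : 'M[R]_m :=
  \matrix_(k, l) (((k == i) && (l == j)) || ((k == j) && (l == i)))%:R.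

Definition Gmap (R : realType) (m : nat) (x : pairs m -> R) : 'M[R]_m :=
  1%:M + \sum_(p : pairs m) x p *: Aij R (val p).1 (val p).2.

(* nabla G(x) v = sum_{i<j} v_ij A^{ij} (independent of x, since G is affine) *)
Definition DGmap (R : realType) (m : nat) (x : pairs m -> R) (v : pairs m -> R)
  : 'M[R]_m :=
  \sum_(p : pairs m) v p *: Aij R (val p).1 (val p).2.

Definition mx_close (R : realType) (m : nat) (A B : 'M[R]_m) (e : R) : Prop :=
  forall k l, `|A k l - B k l| < e.

(* Bouligand (contingent) tangent cone of K (a subset of S^m) at Y, inside S^m:
   D in T_K(Y) iff there are t_k -> 0+, D_k -> D (in S^m) with Y + t_k D_k in K,
   written in epsilon-delta form. *)
Definition tangent_cone (R : realType) (m : nat) (K : 'M[R]_m -> Prop)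
  (Y : 'M[R]_m) (D : 'M[R]_m) : Prop :=
  symmx D /\
  forall eps delta : R, 0 < eps -> 0 < delta ->
    exists (t : R) (D' : 'M[R]_m),
      [/\ 0 < t, t < delta, symmx D', mx_close D' D eps & K (Y + t *: D')].

Definition lineality (R : realType) (m : nat) (C : 'M[R]_m -> Prop)
  (D : 'M[R]_m) : Prop := C D /\ C (- D).

(* Main.v *)
Require Import Defs.
From HB Require Import structures.
From mathcomp Require Import all_boot all_order all_algebra.
From mathcomp Require Import reals.
Import Order.TTheory GRing.Theory Num.Theory.
Local Open Scope ring_scope.

Lemma entry_le_sum (R : realType) (m : nat) (C : 'M[R]_m) k l :
  `|C k l| <= 1 + \sum_k' \sum_l' `|C k' l'|.
Proof.
rewrite (bigD1 k) //= (bigD1 l) //=.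
rewrite -addrA ler_wpDl // ler_wpDr // ?addr_ge0 ?sumr_ge0 // => *;
  rewrite ?sumr_ge0 // => *.
Qed.

Lemma tangent_congr (R : realType) (m : nat) (Y M : 'M[R]_m) :
  psdmx Y ->
  tangent_cone (@psdmx R m) Y (M^T *m Y + Y *m M).
Proof.
move=> [sY pY]; split.
  by rewrite /symmx linearD /= !trmx_mul trmxK sY addrC.
move=> eps delta e0 d0.
set C := M^T *m Y *m M.
set c := 1 + \sum_k' \sum_l' `|C k' l'|.
have c0 : 0 < c by rewrite ltr_wpDr ?ltr01 // sumr_ge0 // => *; rewrite sumr_ge0.
set t := Num.min delta (eps / c) / 2.
have mpos : 0 < Num.min delta (eps / c) by rewrite lt_min d0 divr_gt0.
have t0 : 0 < t by rewrite divr_gt0.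
exists t, (M^T *m Y + Y *m M + t *: C); split => //.
- rewrite /t ltr_pdivrMr // (le_lt_trans (y := delta)) ?ge_min ?lexx //.
  by rewrite ltr_pMr // ltr1n.
- rewrite /symmx linearD /= linearZ /= linearD /= /C !trmx_mul !trmxK sY. by rewrite mulmxA [Y *m M + _]addrC.
- move=> k l; have -> : (M^T *m Y + Y *m M + t *: C) k l - (M^T *m Y + Y *m M) k l = t * C k l by rewrite mxE [in X in _ - X = _]mxE addrAC mxE subrr add0r mxE.
  rewrite normrM ger0_norm ?ltW //.
  apply: (le_lt_trans (y := t * c)); first by apply: ler_wpM2l; [exact: ltW | exact: (@entry_le_sum _ _ C k l)].
  rewrite -/c /t -mulrA (mulrC _ c) mulrA.
  rewrite ltr_pdivrMr // (le_lt_trans (y := eps)) //.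
    by rewrite -ler_pdivlMr // ge_min lexx orbT.
  by rewrite ltr_pMr // ltr1n.
- set P := 1%:M + t *: M.
  have -> : Y + t *: (M^T *m Y + Y *m M + t *: C) = P^T *m Y *m P.
    have -> : P^T = 1%:M + t *: M^T by rewrite /P linearD /= trmx1 linearZ.
    rewrite /P /C !mulmxDl !mulmxDr !mul1mx !mulmx1.
    rewrite -!scalemxAl -!scalemxAr !scalerDr !scalerA.
    by rewrite -!addrA; congr (_ + _); rewrite addrCA.
  split.
    by rewrite /symmx !trmx_mul trmxK sY mulmxA.
  move=> v; rewrite -!mulmxA [Y *m _]mulmxA mulmxA -trmx_mul -mulmxA.
  by rewrite mulmxA; apply: pY.
Qed.

Lemma Aij_entry (R : realType) (m : nat) (i j k l : 'I_m) :
  Aij R i j k l = (((k == i) && (l == j)) || ((k == j) && (l == i)))%:R.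
Proof. by rewrite mxE. Qed.

Lemma Aij_sym (R : realType) (m : nat) (i j : 'I_m) : (Aij R i j)^T = Aij R i j.
Proof.
apply/matrixP => k l; rewrite mxE !Aij_entry.
by case: (l == i) (k == j) (l == j) (k == i) => [] [] [] [].
Qed.

Lemma DG_sym (R : realType) (m : nat) (x v : pairs m -> R) : (DGmap x v)^T = DGmap x v.
Proof.
rewrite /DGmap; apply/matrixP => k l; rewrite mxE !summxE.
apply: eq_bigr => p _; rewrite !mxE; congr (_ * _).
by case: (l == _) (k == _) (l == _) (k == _) => [] [] [] [].
Qed.

Lemma G_diag (R : realType) (m : nat) (x : pairs m -> R) k : Gmap x k k = 1.
Proof.
rewrite /Gmap mxE summxE big1 ?addr0 ?mxE ?eqxx // => p _.
rewrite mxE Aij_entry.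
case: p => [[i j] /= hij].
case: (boolP (k == i)) => [/eqP ki|]; case: (boolP (k == j)) => [/eqP kj|] //=;
  try by rewrite mulr0.
by exfalso; move: (hij); rewrite -ki -kj ltnn.
Qed.

Lemma DG_entry_lt (R : realType) (m : nat) (x : pairs m -> R) (N : 'M[R]_m) (k l : 'I_m) :
  (k < l)%N -> DGmap x (fun p => N (val p).1 (val p).2) k l = N k l.
Proof.
move=> hkl.
pose p0 : pairs m := exist _ (k, l) hkl.
rewrite /DGmap summxE (bigD1 p0) //= big1 ?addr0.
  by rewrite !mxE !eqxx /= mulr1.
case=> [[i j] /= hij] hne; rewrite mxE Aij_entry /=.
case: (boolP ((k == i) && (l == j))) => [/andP [/eqP ki /eqP lj]|] /=.
  by exfalso; move/eqP: hne; apply; apply: val_inj; rewrite /= ki lj.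
case: (boolP ((k == j) && (l == i))) => [/andP [/eqP kj /eqP li]|] /=;
  last by rewrite mulr0.
by exfalso; move: (hij); rewrite -kj -li => h; move: (ltn_trans h hkl); rewrite ltnn.
Qed.

Lemma DG_entry_eq (R : realType) (m : nat) (x v : pairs m -> R) k :
  DGmap x v k k = 0.
Proof.
rewrite /DGmap summxE big1 // => p _.
rewrite mxE Aij_entry.
case: p => [[i j] /= hij].
case: (boolP (k == i)) => [/eqP ki|]; case: (boolP (k == j)) => [/eqP kj|] //=;
  try by rewrite mulr0.
by exfalso; move: (hij); rewrite -ki -kj ltnn.
Qed.

Lemma DG_repr (R : realType) (m : nat) (x : pairs m -> R) (N : 'M[R]_m) :
  N^T = N -> (forall k, N k k = 0) ->
  DGmap x (fun p => N (val p).1 (val p).2) = N.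
Proof.
move=> sN dN; apply/matrixP => k l.
case: (ltngtP k l) => hkl.
- exact: DG_entry_lt.
- transitivity ((DGmap x (fun p => N (val p).1 (val p).2))^T k l);
    first by rewrite DG_sym.
  by rewrite mxE DG_entry_lt // -[in RHS]sN mxE.
- have -> : k = l by apply: val_inj.
  by rewrite DG_entry_eq dN.
Qed.

Theorem proposition5p2 (R : realType) (m : nat) (hm : (2 <= m)%N)
  (x : pairs m -> R) (hx : psdmx (@Gmap R m x)) :
  forall S : 'M[R]_m,
    symmx S <->
    exists (L : 'M[R]_m) (v : pairs m -> R),
      lineality (tangent_cone (@psdmx R m) (@Gmap R m x)) L /\
      S = L + @DGmap R m x v.
Proof.
move=> S; split; last first.
  move=> [L [v [[[sL _] _] ->]]].
  by rewrite /symmx linearD /= sL DG_sym.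
move=> sS.
set Y := Gmap x.
pose d : 'rV[R]_m := \row_k (S k k / 2).
pose M := diag_mx d.
pose L := M^T *m Y + Y *m M.
have hL := @tangent_congr R m Y M hx.
have hNL : tangent_cone (@psdmx R m) Y (- L).
  have -> : - L = (- M)^T *m Y + Y *m (- M).
    by rewrite /L linearN /= mulNmx mulmxN opprD.
  exact: tangent_congr.
have sL : L^T = L by case: hL.
pose N := S - L.
exists L, (fun p => N (val p).1 (val p).2); split; first by split.
rewrite DG_repr.
- by rewrite /N addrC subrK.
- by rewrite /N linearB /= sS sL.
move=> k; have gd : Y k k = 1 by exact: G_diag.
clearbody Y; rewrite /N /L /M tr_diag_mx mul_diag_mx mul_mx_diag !mxE gd.
by rewrite mulr1 mul1r -splitr subrr.
Qed.
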